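(* Let $U\subseteq\mathbb{R}$ satisfy $|\mathbb{R}\setminus U| = \mathfrak{c}$. Then there is a two-point selection $f$ on $\mathbb{R}$ such that the interior of $U$ in the topology $\tau_f$ is empty. In particular, if $U\neq\emptyset$, then $U\notin\tau_f$.
   Context: $\mathfrak{c}=|\mathbb{R}|$. A two-point selection on $\mathbb{R}$ is a function $f$ from the set of two-element subsets of $\mathbb{R}$ to $\mathbb{R}$ with $f(F)\in F$. Write $r<_f s$ if $f(\{r,s\})=r$ ($r\ne s$), $(\leftarrow,r)_f=\{x: x<_f r\}$, $(r,\rightarrow)_f=\{x: r<_f x\}$. The topology $\tau_f$ on $\mathbb{R}$ is the topology generated (as a subbase) by all sets $(\leftarrow,r)_f$, $(r,\rightarrow)_f$, $r\in\mathbb{R}$. *)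

(* Defs.v *)
From Stdlib Require Import Reals.
From mathcomp Require Import all_boot.
From mathcomp Require Import boolp classical_sets cardinality.
Export Reals.
Set Implicit Arguments. Unset Strict Implicit. Unset Printing Implicit Defensive.
Local Open Scope classical_set_scope.

(* A two-point selection on R: the value on the two-element set {x,y} (x <> y)
   is f x y = f y x, and it belongs to {x,y}. Values on the diagonal are irrelevant. *)
Definition two_point_selection (f : R -> R -> R) : Prop :=
  forall x y : R, x <> y -> f x y = f y x /\ (f x y = x \/ f x y = y).

Definition sel_lt (f : R -> R -> R) (r s : R) : Prop := r <> s /\ f r s = r.

Definition sel_left_ray (f : R -> R -> R) (r : R) : set R := [set x | sel_lt f x r].
Definition sel_right_ray (f : R -> R -> R) (r : R) : set R := [set x | sel_lt f r x].

Definition sel_subbasic (f : R -> R -> R) (A : set R) : Prop :=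
  exists r : R, A = sel_left_ray f r \/ A = sel_right_ray f r.

(* x is in the tau_f-interior of U: some finite intersection of subbasic sets
   (the empty intersection being R) contains x and is contained in U. *)
Definition tau_interior (f : R -> R -> R) (U : set R) : set R :=
  [set x | exists (n : nat) (A : nat -> set R),
      (forall i, (i < n)%N -> sel_subbasic f (A i) /\ A i x) /\
      (forall y, (forall i, (i < n)%N -> A i y) -> U y)].

Definition tau_open (f : R -> R -> R) (U : set R) : Prop :=
  forall x, U x -> tau_interior f U x.

(* Main.v *)
Require Import Defs.
From mathcomp Require Import all_boot boolp classical_sets cardinality.
From mathcomp Require Import functions Rstruct Rstruct_topology.
From Stdlib Require Import Lra.
Local Open Scope classical_set_scope.

Section Constr.
Variables (U : set R) (h : R -> R).

Definition lessR (x y : R) : Prop :=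
  if pselect (U x) then (if pselect (U y) then Rlt x y else Rlt x (h y))
  else (if pselect (U y) then Rle (h x) y else Rlt (h x) (h y)).

Definition fsel (x y : R) : R := if pselect (lessR x y) then x else y.

Ltac unl := intros; unfold lessR in *;
  repeat match goal with
  | |- context [pselect ?P] => destruct (pselect P)
  | H : context [pselect ?P] |- _ => destruct (pselect P)
  end; simpl in *; intros; try contradiction; try lra.

Lemma lessR_irr x : ~ lessR x x.
Proof. unl. Qed.

Lemma lessR_asym x y : lessR x y -> ~ lessR y x.
Proof. unl. Qed.

Lemma lessR_tot (hinj : forall a b, ~ U a -> ~ U b -> h a = h b -> a = b) x y :
  x <> y -> lessR x y \/ lessR y x.
Proof.
move=> Hne; unfold lessR.
destruct (pselect (U x)) as [ux|ux]; destruct (pselect (U y)) as [uy|uy]; simpl.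
- destruct (Rtotal_order x y) as [H|[H|H]]; [left; lra|contradiction|right; lra].
- destruct (Rtotal_order x (h y)) as [H|[H|H]]; [left; lra|right; lra|right; lra].
- destruct (Rtotal_order y (h x)) as [H|[H|H]]; [right; lra|left; lra|left; lra].
- destruct (Rtotal_order (h x) (h y)) as [H|[H|H]]; [left; lra| |right; lra].
  by case: Hne; apply: hinj.
Qed.

Lemma sel_ltE a b : sel_lt fsel a b <-> lessR a b.
Proof.
unfold sel_lt, fsel; split.
- move=> [Hne]; destruct (pselect (lessR a b)) as [l|l] => // E; by case: Hne.
- move=> l; split.
  + by move=> E; subst; exact: (lessR_irr _ l).
  + by destruct (pselect (lessR a b)).
Qed.

Lemma fin_min (P : nat -> R -> Prop) n :
  (forall i e e', P i e -> Rlt 0 e' /\ Rle e' e -> P i e') ->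
  (forall i, (i < n)%N -> exists e, Rlt 0 e /\ P i e) ->
  exists e, Rlt 0 e /\ forall i, (i < n)%N -> P i e.
Proof.
move=> Pm; elim: n => [|n IH] H.
  by exists R1; split => //; lra.
have [e1 [e1p He1]] : exists e, Rlt 0 e /\ forall i, (i < n)%N -> P i e.
  by apply: IH => i Hi; apply: H; apply: ltnW.
have [e2 [e2p He2]] := H n (ltnSn n).
exists (Rmin e1 e2); split; first by apply: Rmin_pos.
move=> i; rewrite ltnS leq_eqVlt => /orP [/eqP ->|Hi].
  apply: (Pm _ _ _ He2); split; [by apply: Rmin_pos | exact: Rmin_r].
apply: (Pm _ _ _ (He1 _ Hi)); split; [by apply: Rmin_pos | exact: Rmin_l].
Qed.

End Constr.

Local Open Scope R_scope.
Theorem theorem3p12 (U : set R) :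
  (~` U #= [set: R])%card ->
  exists f : R -> R -> R,
    two_point_selection f /\
    tau_interior f U = set0 /\
    (U <> set0 -> ~ tau_open f U).
Proof.
move=> /card_set_bijP [h [_ hinj hsurj]].
have hinj' : forall a b, ~ U a -> ~ U b -> h a = h b -> a = b.
  by move=> a b Ha Hb; apply: hinj; rewrite inE.
have hsurj' : forall y, exists c, ~ U c /\ h c = y.
  by move=> y; have [c Cc <-] := hsurj y I; exists c.
exists (fsel U h).
have int0 : tau_interior (fsel U h) U = set0.
  apply/seteqP; split => x //=.
  move=> [n [A [H1 H2]]].
  suff [c [Cc Hc]] : exists c, ~ U c /\ forall i, (i < n)%N -> A i c.
    by apply: Cc; apply: H2.
  have E1 : forall r y, sel_left_ray (fsel U h) r y <-> lessR U h y r.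
    by move=> r y; rewrite /sel_left_ray /=; apply: sel_ltE.
  have E2 : forall r y, sel_right_ray (fsel U h) r y <-> lessR U h r y.
    by move=> r y; rewrite /sel_right_ray /=; apply: sel_ltE.
  destruct (pselect (U x)) as [Ux|Cx].
  - have [e [ep He]] : exists e, Rlt 0 e /\ forall i, (i < n)%N -> forall c, ~ U c -> Rlt x (h c) -> Rlt (h c) (x+e) -> A i c.
      apply: (@fin_min (fun i e => forall c, ~ U c -> Rlt x (h c) -> Rlt (h c) (x+e) -> A i c) n).
        move=> i e e' Hie [? ?] c Cc ? ?; apply: Hie => //; lra.
      2: by have [c [Cc hc]] := hsurj' (x + e/2); exists c; split => // i Hi; apply: He => //; lra.
    move=> i Hi; have [[r [->|->]] Ax] := H1 i Hi.
    + move/E1: Ax; unfold lessR; destruct (pselect (U x)) as [?|] => //; simpl.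
      destruct (pselect (U r)) as [Ur|Cr]; simpl => Ax.
      * exists (r - x); split; first lra.
        move=> c Cc ? ?; apply/E1; unfold lessR.
        destruct (pselect (U c)) => //; destruct (pselect (U r)) => //; simpl; lra.
      * exists (h r - x); split; first lra.
        move=> c Cc ? ?; apply/E1; unfold lessR.
        destruct (pselect (U c)) => //; destruct (pselect (U r)) => //; simpl; lra.
    + move/E2: Ax; unfold lessR; destruct (pselect (U x)) as [?|] => //; simpl => Ax.
      exists R1; split; first lra.
      move=> c Cc ? ?; apply/E2; unfold lessR.
      destruct (pselect (U c)) => //; destruct (pselect (U r)) => //; simpl in *; lra.
  - have [e [ep He]] : exists e, Rlt 0 e /\ forall i, (i < n)%N -> forall c, ~ U c -> Rlt (h x - e) (h c) -> Rlt (h c) (h x) -> A i c.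
      apply: (@fin_min (fun i e => forall c, ~ U c -> Rlt (h x - e) (h c) -> Rlt (h c) (h x) -> A i c) n).
        move=> i e e' Hie [? ?] c Cc ? ?; apply: Hie => //; lra.
      2: by have [c [Cc hc]] := hsurj' (h x - e/2); exists c; split => // i Hi; apply: He => //; lra.
    move=> i Hi; have [[r [->|->]] Ax] := H1 i Hi.
    + move/E1: Ax; unfold lessR; destruct (pselect (U x)) as [|?] => //; simpl => Ax.
      exists R1; split; first lra.
      move=> c Cc ? ?; apply/E1; unfold lessR.
      destruct (pselect (U c)) => //; destruct (pselect (U r)) => //; simpl in *; lra.
    + move/E2: Ax; unfold lessR; destruct (pselect (U x)) as [|?] => //; simpl.
      destruct (pselect (U r)) as [Ur|Cr]; simpl => Ax.
      * exists (h x - r); split; first lra.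
        move=> c Cc ? ?; apply/E2; unfold lessR.
        destruct (pselect (U c)) => //; destruct (pselect (U r)) => //; simpl; lra.
      * exists (h x - h r); split; first lra.
        move=> c Cc ? ?; apply/E2; unfold lessR.
        destruct (pselect (U c)) => //; destruct (pselect (U r)) => //; simpl; lra.
split; [|split] => //.
- move=> x y Hne.
  have [l|l] := @lessR_tot U h hinj' x y Hne.
  + have nl := lessR_asym U h _ _ l.
    unfold fsel; destruct (pselect (lessR U h x y)) => //; destruct (pselect (lessR U h y x)) => //.
    by split; [|left].
  + have nl := lessR_asym U h _ _ l.
    unfold fsel; destruct (pselect (lessR U h x y)) => //; destruct (pselect (lessR U h y x)) => //.
    by split; [|right].
- move=> Un0 Ho; apply: Un0; apply/seteqP; split => x //= Ux.
  by have := Ho x Ux; rewrite int0.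
Qed.
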